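(* Let $m\ge1$, $0<x_1<x_2<\cdots<x_m<1$, and let $k_0\ge0$, $k_1\ge0$ with $k_0+k_1>0$. Define $G:[0,1]\times[0,1]\to\mathbb{R}$ by $$G(x,\zeta)=\begin{cases}\dfrac{(k_1\zeta-k_1-1)(k_0x+1)}{k_0+k_1+k_0k_1}, & 0\le x<\zeta,\\[2mm] \dfrac{(k_1x-k_1-1)(k_0\zeta+1)}{k_0+k_1+k_0k_1}, & \zeta\le x\le 1.\end{cases}$$ Then the $m\times m$ matrix $\big(G(x_i,x_j)\big)_{i,j=1}^m$ is invertible.
   Context: $G$ is the Green's function of the steady-state problem $\bar z_{xx}=f$ on $(0,1)$ with $\bar z_x(0)-k_0\bar z(0)=0$, $\bar z_x(1)+k_1\bar z(1)=0$. *)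

(* Defs.v *)
From HB Require Import structures.
From mathcomp Require Import all_boot all_order all_algebra.
From mathcomp Require Import reals.
Set Implicit Arguments. Unset Strict Implicit. Unset Printing Implicit Defensive.
Import Order.TTheory GRing.Theory Num.Theory.
Local Open Scope ring_scope.

(* Green's function of z'' = f on (0,1), z'(0) - k0 z(0) = 0, z'(1) + k1 z(1) = 0. *)
Definition green (R : realType) (k0 k1 : R) (x zeta : R) : R :=
  if x < zeta then
    (k1 * zeta - k1 - 1) * (k0 * x + 1) / (k0 + k1 + k0 * k1)
  else
    (k1 * x - k1 - 1) * (k0 * zeta + 1) / (k0 + k1 + k0 * k1).

Definition green_mx (R : realType) (k0 k1 : R) (m : nat) (x : 'I_m -> R) : 'M[R]_m :=
  \matrix_(i < m, j < m) green k0 k1 (x i) (x j).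

(* Main.v *)
Require Import Defs.
From HB Require Import structures.
From mathcomp Require Import all_boot all_order all_algebra.
From mathcomp Require Import reals.
From mathcomp Require Import ring lra.
Import Order.TTheory GRing.Theory Num.Theory.
Local Open Scope ring_scope.

Definition uu {R : realType} (k0 t : R) := k0 * t + 1.
Definition vv {R : realType} (k1 t : R) := k1 * t - k1 - 1.

Lemma green_lt (R : realType) (k0 k1 a b : R) : a < b ->
  green k0 k1 a b = vv k1 b * uu k0 a / (k0 + k1 + k0 * k1).
Proof. by move=> h; rewrite /green h. Qed.

Lemma green_ge (R : realType) (k0 k1 a b : R) : b <= a ->
  green k0 k1 a b = vv k1 a * uu k0 b / (k0 + k1 + k0 * k1).
Proof. by move=> h; rewrite /green ltNge h. Qed.

Lemma green_le (R : realType) (k0 k1 a b : R) : a <= b ->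
  green k0 k1 a b = vv k1 b * uu k0 a / (k0 + k1 + k0 * k1).
Proof.
rewrite le_eqVlt => /orP [/eqP <-|h]; last exact: green_lt.
exact: green_ge.
Qed.

Lemma u_gt0 (R : realType) (k0 t : R) : 0 <= k0 -> 0 <= t -> 0 < uu k0 t.
Proof. move=> h0 h; rewrite /uu; have := mulr_ge0 h0 h; lra. Qed.

Lemma v_lt0 (R : realType) (k1 t : R) : 0 <= k1 -> t <= 1 -> vv k1 t < 0.
Proof. move=> h0 h; rewrite /vv; have h1 : 0 <= 1 - t by rewrite subr_ge0.
 have := mulr_ge0 h0 h1; lra. Qed.

Theorem proposition2 (R : realType) (m : nat) (x : 'I_m -> R) (k0 k1 : R) :
  (1 <= m)%N ->
  (forall i : 'I_m, 0 < x i /\ x i < 1) ->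
  (forall i j : 'I_m, (i < j)%N -> x i < x j) ->
  0 <= k0 -> 0 <= k1 -> 0 < k0 + k1 ->
  green_mx k0 k1 x \in unitmx.
Proof.
case: m x => [|n] x //= _ hx hmono hk0 hk1 hk.
have hD : 0 < k0 + k1 + k0 * k1 by have := mulr_ge0 hk0 hk1; lra.
have hDn : k0 + k1 + k0 * k1 != 0 by rewrite gt_eqF.
have hu : forall i, uu k0 (x i) != 0.
  by move=> i; rewrite gt_eqF // u_gt0 //; case: (hx i) => h _; exact: ltW.
set A := green_mx k0 k1 x.
pose N : 'M[R]_n.+1 := \matrix_(i, j)
  if (j == i.+1 :> nat) then uu k0 (x i) / uu k0 (x j) else 0.
pose B := (1 - N) *m A.
have hB : forall i j, B i j = A i j - (if (i.+1 < n.+1)%N then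
   uu k0 (x i) / uu k0 (x (inord i.+1)) * A (inord i.+1) j else 0).
  move=> i j; rewrite /B mulmxBl mul1mx !mxE; congr (_ - _).
  case: ifPn => hi.
  - rewrite (bigD1 (inord i.+1)) //= big1 ?addr0 => [|k hk2].
      by rewrite !mxE inordK // eqxx.
    rewrite mxE; case: eqP => [e|_]; last by rewrite mul0r.
    have ek : k = inord i.+1 by apply: val_inj; rewrite /= inordK // e.
    by move: hk2; rewrite ek eqxx.
  - apply: big1 => k _; rewrite mxE; case: eqP => [e|_]; last by rewrite mul0r.
    by move: hi; rewrite -e ltn_ord.
have trig : is_trig_mx B.
  apply/is_trig_mxP => i j hij; rewrite hB.
  have hi1 : (i.+1 < n.+1)%N by exact: leq_trans hij (ltn_ord j).
  rewrite hi1 /A !mxE.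
  set i' := (inord i.+1 : 'I_n.+1).
  have hi' : val i' = i.+1 by exact: inordK.
  rewrite green_lt; last exact: hmono.
  rewrite (@green_le _ _ _ (x i') (x j)); last first.
    case: (ltngtP (val i') (val j)) => h.
    - by apply: ltW; apply: hmono.
    - by move: h; rewrite hi' ltnNge hij.
    - by have -> : i' = j by apply: val_inj.
  have := hu i'; move: (uu k0 (x i')) => U hU.
  by field; rewrite hDn hU.
have detE : \det (1 - N) = 1.
  rewrite -det_tr det_trig.
    by apply: big1 => i _; rewrite !mxE eqxx (ltn_eqF (ltnSn i)) subr0.
  apply/is_trig_mxP => i j h; rewrite !mxE.
  have -> : (j == i) = false by apply/eqP => e; rewrite e ltnn in h.
  have -> : (val i == (val j).+1) = false.
    by apply/negbTE; rewrite neq_ltn (leq_trans h) ?leqnSn.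
  by rewrite subr0.
rewrite unitmxE unitfE.
have <- : \det B = \det A by rewrite det_mulmx detE mul1r.
rewrite det_trig // prodf_seq_neq0; apply/allP => i _ /=.
rewrite hB /A !mxE green_ge //.
case: ifP => hi1; last first.
  rewrite subr0 !mulf_neq0 ?invr_eq0 //.
  by rewrite lt_eqF // v_lt0 //; case: (hx i) => _ h; exact: ltW.
set i' := (inord i.+1 : 'I_n.+1).
have hi' : val i' = i.+1 by exact: inordK.
have hlt : x i < x i' by apply: hmono; rewrite hi'.
rewrite green_ge; last exact: ltW.
have -> : vv k1 (x i) * uu k0 (x i) / (k0 + k1 + k0 * k1) -
   uu k0 (x i) / uu k0 (x i') * (vv k1 (x i') * uu k0 (x i) / (k0 + k1 + k0 * k1))
   = - (uu k0 (x i) * (x i' - x i)) / uu k0 (x i').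
  have := hu i'; rewrite /uu /vv => hU; by field; rewrite hDn hU.
rewrite !mulf_neq0 ?invr_eq0 ?oppr_eq0 //.
by rewrite mulf_neq0 ?hu // subr_eq0 gt_eqF.
Qed.
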